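(* Let $(x,y,s)\in\mathcal{N}(\theta)$ with $\theta\in\left(0,\ \min\left\{\frac{1}{3\sqrt n},\ \frac{1}{4\|QVV^T\|_F+1}\right\}\right)$, and let $\mu=x^Ts/n$, $\omega=\max_i\{x_i,s_i\}$ and $M=[\,SV+XQV\ \ -XA^T\,]$. Then the condition number of $M$ satisfies $$\kappa_M=\mathcal{O}\left(\frac{\omega^2+\mu\,\sigma_{\max}(Q)}{\mu}\,\kappa_{VAQ}\right),$$ where $\kappa_{VAQ}$ is the condition number of the matrix $\begin{bmatrix}V^T&0\\0&A\end{bmatrix}\begin{bmatrix}I&-Q\\0&I\end{bmatrix}$.
   Context: Given $b\in\mathbb{R}^m$, $c\in\mathbb{R}^n$, $A\in\mathbb{R}^{m\times n}$ with $\mathrm{rank}(A)=m\le n$ and symmetric positive semidefinite $Q\in\mathbb{R}^{n\times n}$ (data of the LCQO problem $\min c^Tx+\frac12x^TQx$ s.t. $Ax=b$, $x\ge0$, with dual constraints $A^Ty+s-Qx=c$, $s\ge0$). Partition $A=[A_B\ \ A_N]$ with $A_B$ a nonsingular $m\times m$ basis and set $V=\begin{bmatrix}A_B^{-1}A_N\\-I\end{bmatrix}\in\mathbb{R}^{n\times(n-m)}$, so $AV=0$. $X=\mathrm{diag}(x)$, $S=\mathrm{diag}(s)$, $e$ is the all-ones vector. $\mathcal{PD}^0=\{(x,y,s): Ax=b,\ A^Ty+s-Qx=c,\ x>0,\ s>0\}$ and $\mathcal{N}(\theta)=\{(x,y,s)\in\mathcal{PD}^0:\|XSe-\mu e\|_2\le\theta\mu\}$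 with $\mu=x^Ts/n$. Condition number means ratio of largest to smallest singular value; $\sigma_{\max}(Q)$ is the largest singular value of $Q$. The $\mathcal{O}$ hides an absolute constant. *)

(* Defs.v *)
From HB Require Import structures.
From mathcomp Require Import all_boot all_order all_algebra.
From mathcomp Require Import classical_sets reals.
Set Implicit Arguments. Unset Strict Implicit. Unset Printing Implicit Defensive.
Import Order.TTheory GRing.Theory Num.Theory.
Local Open Scope ring_scope.
Local Open Scope classical_set_scope.

Section Defs.
Variable R : realType.

Definition vnorm (p : nat) (v : 'cV[R]_p) : R :=
  Num.sqrt (\sum_(i < p) v i 0 ^+ 2).

Definition frob (p q : nat) (B : 'M[R]_(p, q)) : R :=
  Num.sqrt (\sum_(i < p) \sum_(j < q) B i j ^+ 2).

Definition sigma_max (p q : nat) (B : 'M[R]_(p, q)) : R :=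
  sup [set r | exists v : 'cV[R]_q, vnorm v = 1 /\ r = vnorm (B *m v)].

(* Smallest singular value, i.e. the min(p,q)-th singular value
   (Courant-Fischer: min over unit vectors of |Bv| if p >= q, of |B^T y| otherwise) *)
Definition sigma_min (p q : nat) (B : 'M[R]_(p, q)) : R :=
  if (q <= p)%N then
    inf [set r | exists v : 'cV[R]_q, vnorm v = 1 /\ r = vnorm (B *m v)]
  else
    inf [set r | exists y : 'cV[R]_p, vnorm y = 1 /\ r = vnorm (B^T *m y)].

Definition cond (p q : nat) (B : 'M[R]_(p, q)) : R := sigma_max B / sigma_min B.

Definition diagv (p : nat) (v : 'cV[R]_p) : 'M[R]_p := diag_mx v^T.

Definition Vmat (m k : nat) (AB : 'M[R]_m) (AN : 'M[R]_(m, k)) : 'M[R]_(m + k, k) :=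
  col_mx (invmx AB *m AN) (- 1%:M).

Definition mu_of (p : nat) (x s : 'cV[R]_p) : R := (x^T *m s) 0 0 / p%:R.

Definition omega_of (p : nat) (x s : 'cV[R]_p) : R :=
  \big[Num.max/0]_(i < p) Num.max (x i 0) (s i 0).

Definition in_PD0 (m p : nat) (A : 'M[R]_(m, p)) (b : 'cV[R]_m) (c : 'cV[R]_p)
  (Q : 'M[R]_p) (x : 'cV[R]_p) (y : 'cV[R]_m) (s : 'cV[R]_p) : Prop :=
  A *m x = b /\ A^T *m y + s - Q *m x = c /\
  (forall i, 0 < x i 0) /\ (forall i, 0 < s i 0).

Definition in_N (m p : nat) (A : 'M[R]_(m, p)) (b : 'cV[R]_m) (c : 'cV[R]_p)
  (Q : 'M[R]_p) (theta : R) (x : 'cV[R]_p) (y : 'cV[R]_m) (s : 'cV[R]_p) : Prop :=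
  in_PD0 A b c Q x y s /\
  vnorm (diagv x *m diagv s *m const_mx 1 - (mu_of x s) *: const_mx 1)
    <= theta * mu_of x s.

End Defs.

(* Main.v *)
Require Import Defs.
From HB Require Import structures.
From mathcomp Require Import all_boot all_order all_algebra.
From mathcomp Require Import classical_sets reals.
From mathcomp Require Import boolp ring lra zify.
Import Order.TTheory GRing.Theory Num.Theory.
Set Implicit Arguments. Unset Strict Implicit. Unset Printing Implicit Defensive.
Local Open Scope ring_scope.



Definition nsq (R : realType) (p : nat) (v : 'cV[R]_p) : R := \sum_(i < p) v i 0 ^+ 2.

Lemma nsq_ge0 (R : realType) (p : nat) (v : 'cV[R]_p) : 0 <= nsq v.
Proof. by apply: sumr_ge0 => i _; rewrite sqr_ge0. Qed.

Lemma vnormE (R : realType) (p : nat) (v : 'cV[R]_p) : vnorm v = Num.sqrt (nsq v).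
Proof. by []. Qed.

Lemma vnorm_ge0 (R : realType) (p : nat) (v : 'cV[R]_p) : 0 <= vnorm v.
Proof. by rewrite vnormE sqrtr_ge0. Qed.

Lemma vnorm_sq (R : realType) (p : nat) (v : 'cV[R]_p) : vnorm v ^+ 2 = nsq v.
Proof. by rewrite vnormE sqr_sqrtr // nsq_ge0. Qed.

Lemma CS (R : realType) (p : nat) (a b : 'I_p -> R) :
  (\sum_i a i * b i) ^+ 2 <= (\sum_i a i ^+ 2) * (\sum_i b i ^+ 2).
Proof.
set A := \sum_i a i ^+ 2; set B := \sum_i b i ^+ 2; set C := \sum_i a i * b i.
have A0 : 0 <= A by apply: sumr_ge0 => i _; rewrite sqr_ge0.
have B0 : 0 <= B by apply: sumr_ge0 => i _; rewrite sqr_ge0.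
have [Az|Ap] := eqVneq A 0.
  have ai0 : forall i, a i = 0.
    move=> i; apply/eqP; rewrite -sqrf_eq0; apply/eqP.
    by move/eqP: Az; rewrite psumr_eq0 => [/allP H|j _]; [apply/eqP; apply: (implyP (H i (mem_index_enum i))) | rewrite sqr_ge0].
  have -> : C = 0 by rewrite /C big1 // => i _; rewrite ai0 mul0r.
  by rewrite Az expr0n /= mul0r.
have Apos : 0 < A by rewrite lt_def Ap A0.
have E : \sum_i (A * b i - C * a i) ^+ 2 = A ^+ 2 * B - 2 * A * C * C + C ^+ 2 * A.
  rewrite (eq_bigr (fun i => A ^+ 2 * b i ^+ 2 - 2 * A * C * (a i * b i) + C ^+ 2 * a i ^+ 2)); last by move=> i _; ring.
  by rewrite big_split sumrB /= -!mulr_sumr.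
have : 0 <= A ^+ 2 * B - 2 * A * C * C + C ^+ 2 * A.
  by rewrite -E; apply: sumr_ge0 => i _; rewrite sqr_ge0.
have -> : A ^+ 2 * B - 2 * A * C * C + C ^+ 2 * A = A * (A * B - C ^+ 2) by ring.
rewrite pmulr_rge0 // subr_ge0.
by [].
Qed.



Definition fsq (R : realType) (p q : nat) (B : 'M[R]_(p, q)) : R :=
  \sum_(i < p) \sum_(j < q) B i j ^+ 2.

Lemma fsq_ge0 (R : realType) (p q : nat) (B : 'M[R]_(p, q)) : 0 <= fsq B.
Proof. by apply: sumr_ge0 => i _; apply: sumr_ge0 => j _; rewrite sqr_ge0. Qed.

Lemma nsq_mul (R : realType) (p q : nat) (B : 'M[R]_(p, q)) (v : 'cV[R]_q) :
  nsq (B *m v) <= fsq B * nsq v.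
Proof.
rewrite /fsq /nsq mulr_suml; apply: ler_sum => i _.
rewrite mxE; exact: CS.
Qed.

Lemma vnorm_mul (R : realType) (p q : nat) (B : 'M[R]_(p, q)) (v : 'cV[R]_q) :
  vnorm (B *m v) <= Num.sqrt (fsq B) * vnorm v.
Proof. by rewrite !vnormE -sqrtrM ?fsq_ge0 // ler_sqrt ?mulr_ge0 ?fsq_ge0 ?nsq_ge0 // nsq_mul. Qed.

Lemma nsq_scale (R : realType) (p : nat) (c : R) (v : 'cV[R]_p) :
  nsq (c *: v) = c ^+ 2 * nsq v.
Proof. by rewrite /nsq mulr_sumr; apply: eq_bigr => i _; rewrite mxE exprMn. Qed.

Lemma vnorm_scale (R : realType) (p : nat) (c : R) (v : 'cV[R]_p) :
  vnorm (c *: v) = `|c| * vnorm v.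
Proof. by rewrite !vnormE nsq_scale sqrtrM ?sqr_ge0 // sqrtr_sqr. Qed.

Lemma nsq0 (R : realType) (p : nat) (v : 'cV[R]_p) : nsq v = 0 -> v = 0.
Proof.
move=> /eqP; rewrite psumr_eq0 => [/allP H|j _]; last by rewrite sqr_ge0.
apply/matrixP => i j; rewrite ord1 mxE; apply/eqP; rewrite -sqrf_eq0.
exact: (implyP (H i (mem_index_enum i))).
Qed.

Definition uset (R : realType) (p q : nat) (B : 'M[R]_(p, q)) : set R :=
  [set r | exists v : 'cV[R]_q, vnorm v = 1 /\ r = vnorm (B *m v)].

Lemma uset_ub (R : realType) (p q : nat) (B : 'M[R]_(p, q)) : has_ubound (uset B).
Proof.
exists (Num.sqrt (fsq B)) => r [v [v1 ->]].
by have := vnorm_mul B v; rewrite v1 mulr1.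
Qed.

Lemma sigma_maxE (R : realType) (p q : nat) (B : 'M[R]_(p, q)) : sigma_max B = sup (uset B).
Proof. by []. Qed.

Lemma le_sigma_max (R : realType) (p q : nat) (B : 'M[R]_(p, q)) (v : 'cV[R]_q) :
  vnorm (B *m v) <= sigma_max B * vnorm v.
Proof.
have [v0|vn0] := eqVneq (vnorm v) 0.
  have : nsq v = 0 by rewrite -vnorm_sq v0 expr0n.
  rewrite v0 mulr0; move/nsq0 => ->.
  by rewrite mulmx0 vnormE /nsq big1 ?sqrtr0 // => i _; rewrite mxE expr0n.
have vp : 0 < vnorm v by rewrite lt_def vn0 vnorm_ge0.
have U : uset B (vnorm (B *m ((vnorm v)^-1 *: v))).
  exists ((vnorm v)^-1 *: v); split => //.
  by rewrite vnorm_scale ger0_norm ?invr_ge0 ?vnorm_ge0 // mulVf.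
have := ub_le_sup (uset_ub B) U.
rewrite -scalemxAr vnorm_scale ger0_norm ?invr_ge0 ?vnorm_ge0 // -sigma_maxE.
by rewrite ler_pdivrMl // mulrC.
Qed.

Definition dot (R : realType) (p : nat) (u v : 'cV[R]_p) : R := \sum_i u i 0 * v i 0.

Lemma dotE (R : realType) (p : nat) (u v : 'cV[R]_p) : (u^T *m v) 0 0 = dot u v.
Proof. by rewrite mxE; apply: eq_bigr => i _; rewrite mxE. Qed.

Lemma dot_le (R : realType) (p : nat) (u v : 'cV[R]_p) : dot u v <= vnorm u * vnorm v.
Proof.
rewrite !vnormE -sqrtrM ?nsq_ge0 //.
apply: (le_trans (ler_norm _)); rewrite -sqrtr_sqr ler_sqrt ?mulr_ge0 ?nsq_ge0 //.
exact: CS.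
Qed.

Lemma nsq_dot (R : realType) (p : nat) (u : 'cV[R]_p) : nsq u = dot u u.
Proof. by apply: eq_bigr => i _; rewrite expr2. Qed.

Lemma vnorm_delta (R : realType) (p : nat) (i : 'I_p) : vnorm (delta_mx i 0 : 'cV[R]_p) = 1.
Proof.
rewrite vnormE /nsq (bigD1 i) //= big1 ?addr0 ?mxE ?eqxx ?expr1n ?sqrtr1 //.
by move=> j /negPf ji; rewrite mxE ji /= expr0n.
Qed.

Lemma sigma_max_ge0 (R : realType) (p q : nat) (B : 'M[R]_(p, q)) : 0 <= sigma_max B.
Proof.
case: q B => [|q] B.
  rewrite sigma_maxE (_ : uset B = set0) ?sup0 //.
  rewrite predeqE => r; split => // -[v [v1 _]].
  by move: v1; rewrite vnormE /nsq big_ord0 sqrtr0 => /eqP; rewrite eq_sym oner_eq0.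
have := le_sigma_max B (delta_mx 0 0); rewrite vnorm_delta mulr1.
exact: le_trans (vnorm_ge0 _).
Qed.

Lemma le_sigma_max_tr (R : realType) (p q : nat) (B : 'M[R]_(p, q)) (y : 'cV[R]_p) :
  vnorm (B^T *m y) <= sigma_max B * vnorm y.
Proof.
set w := B^T *m y.
have [w0|wn0] := eqVneq (vnorm w) 0.
  by rewrite w0 mulr_ge0 ?sigma_max_ge0 ?vnorm_ge0.
have wp : 0 < vnorm w by rewrite lt_def wn0 vnorm_ge0.
have E : nsq w = dot y (B *m w).
  by rewrite nsq_dot -!dotE /w trmx_mul trmxK !mulmxA.
have h1 := dot_le y (B *m w).
have h2 := le_sigma_max B w.
have h3 := vnorm_ge0 y.
rewrite -vnorm_sq -/w in E.
have : vnorm w * vnorm w <= vnorm w * (sigma_max B * vnorm y).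
  rewrite -expr2 E; apply: (le_trans h1).
  have -> : vnorm w * (sigma_max B * vnorm y) = vnorm y * (sigma_max B * vnorm w) by ring.
  exact (ler_wpM2l h3 h2).
by rewrite ler_pM2l.
Qed.



Lemma coord_lo (R : realType) (x s z t mu om : R) :
  0 < x -> 0 < s -> x <= om -> s <= om -> mu <= x * s -> 0 < mu ->
  mu ^+ 2 * (z ^+ 2 + t ^+ 2) - 2 * om ^+ 2 * mu * (z * t) <= om ^+ 2 * (s * z - x * t) ^+ 2.
Proof.
move=> x0 s0 xo so mg mu0.
set g := x * s.
have g0 : 0 < g by rewrite mulr_gt0.
have F : g * (om ^+ 2 * (s * z - x * t) ^+ 2 - (mu ^+ 2 * (z ^+ 2 + t ^+ 2) - 2 * om ^+ 2 * mu * (z * t)))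
  = om ^+ 2 * (g - mu) * (s * z - x * t) ^+ 2 + mu * z ^+ 2 * (om ^+ 2 * s ^+ 2 - g * mu)
    + mu * t ^+ 2 * (om ^+ 2 * x ^+ 2 - g * mu) by rewrite /g; ring.
have xx : x ^+ 2 <= om ^+ 2 by nra.
have ss : s ^+ 2 <= om ^+ 2 by nra.
have gg : g * mu <= g * g by rewrite ler_pM2l.
have h1 : 0 <= om ^+ 2 * s ^+ 2 - g * mu.
  have : 0 <= (om ^+ 2 - x ^+ 2) * s ^+ 2 by rewrite mulr_ge0 ?sqr_ge0 ?subr_ge0.
  have -> : (om ^+ 2 - x ^+ 2) * s ^+ 2 = om ^+ 2 * s ^+ 2 - g * g by rewrite /g; ring.
  move=> h; apply: (le_trans h); by rewrite lerB.
have h2 : 0 <= om ^+ 2 * x ^+ 2 - g * mu.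
  have : 0 <= (om ^+ 2 - s ^+ 2) * x ^+ 2 by rewrite mulr_ge0 ?sqr_ge0 ?subr_ge0.
  have -> : (om ^+ 2 - s ^+ 2) * x ^+ 2 = om ^+ 2 * x ^+ 2 - g * g by rewrite /g; ring.
  move=> h; apply: (le_trans h); by rewrite lerB.
have : 0 <= g * (om ^+ 2 * (s * z - x * t) ^+ 2 - (mu ^+ 2 * (z ^+ 2 + t ^+ 2) - 2 * om ^+ 2 * mu * (z * t))).
  rewrite F; apply: addr_ge0; first apply: addr_ge0.
  - by apply: mulr_ge0; [apply: mulr_ge0; [exact: sqr_ge0| by rewrite subr_ge0]| exact: sqr_ge0].
  - by apply: mulr_ge0 => //; apply: mulr_ge0; [exact: ltW|exact: sqr_ge0].
  - by apply: mulr_ge0 => //; apply: mulr_ge0; [exact: ltW|exact: sqr_ge0].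
by rewrite pmulr_rge0 // subr_ge0.
Qed.

Lemma coord_hi (R : realType) (x s z t om : R) :
  0 < x -> 0 < s -> x <= om -> s <= om ->
  (s * z - x * t) ^+ 2 <= 2 * om ^+ 2 * (z ^+ 2 + t ^+ 2).
Proof.
move=> x0 s0 xo so.
have hs : s ^+ 2 <= om ^+ 2 by nra.
have hx : x ^+ 2 <= om ^+ 2 by nra.
rewrite -subr_ge0.
have -> : 2 * om ^+ 2 * (z ^+ 2 + t ^+ 2) - (s * z - x * t) ^+ 2 =
  (s * z + x * t) ^+ 2 + 2 * z ^+ 2 * (om ^+ 2 - s ^+ 2) + 2 * t ^+ 2 * (om ^+ 2 - x ^+ 2) by ring.
apply: addr_ge0; first apply: addr_ge0.
- exact: sqr_ge0.
- by apply: mulr_ge0; [apply: mulr_ge0; [by []|exact: sqr_ge0]| rewrite subr_ge0].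
- by apply: mulr_ge0; [apply: mulr_ge0; [by []|exact: sqr_ge0]| rewrite subr_ge0].
Qed.

Lemma diag_coord (R : realType) (n : nat) (x s z1 z2 : 'cV[R]_n) i :
  (diagv s *m z1 - diagv x *m z2) i 0 = s i 0 * z1 i 0 - x i 0 * z2 i 0.
Proof. by rewrite /diagv !mul_diag_mx !mxE. Qed.

Lemma nsq_col (R : realType) (p q : nat) (z1 : 'cV[R]_p) (z2 : 'cV[R]_q) :
  nsq (col_mx z1 z2) = nsq z1 + nsq z2.
Proof. by rewrite /nsq big_split_ord /=; congr (_ + _); apply: eq_bigr => i _; rewrite ?col_mxEu ?col_mxEd. Qed.

Lemma key_lo (R : realType) (n : nat) (x s z1 z2 : 'cV[R]_n) (mu om : R) :
  (forall i, 0 < x i 0) -> (forall i, 0 < s i 0) -> (forall i, x i 0 <= om) ->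
  (forall i, s i 0 <= om) -> (forall i, mu <= x i 0 * s i 0) -> 0 < mu ->
  dot z1 z2 <= 0 ->
  mu ^+ 2 * (nsq z1 + nsq z2) <= om ^+ 2 * nsq (diagv s *m z1 - diagv x *m z2).
Proof.
move=> x0 s0 xo so mg mu0 d0.
apply: (le_trans (y := mu ^+ 2 * (nsq z1 + nsq z2) - 2 * om ^+ 2 * mu * dot z1 z2)).
  rewrite lerDl oppr_ge0; apply: mulr_ge0_le0 => //; apply: mulr_ge0; [apply: mulr_ge0 => //; exact: sqr_ge0|exact: ltW].
rewrite /nsq /dot -big_split /= !mulr_sumr -sumrB.
apply: ler_sum => i _; rewrite diag_coord.
exact: coord_lo.
Qed.

Lemma key_hi (R : realType) (n : nat) (x s z1 z2 : 'cV[R]_n) (om : R) :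
  (forall i, 0 < x i 0) -> (forall i, 0 < s i 0) -> (forall i, x i 0 <= om) ->
  (forall i, s i 0 <= om) ->
  nsq (diagv s *m z1 - diagv x *m z2) <= 2 * om ^+ 2 * (nsq z1 + nsq z2).
Proof.
move=> x0 s0 xo so.
rewrite /nsq -big_split /= mulr_sumr.
apply: ler_sum => i _; rewrite diag_coord.
exact: coord_hi.
Qed.

Lemma sqrt_le (R : realType) (a b c d : R) :
  0 <= a -> 0 <= b -> 0 <= c -> 0 <= d -> c ^+ 2 * a <= d ^+ 2 * b ->
  c * Num.sqrt a <= d * Num.sqrt b.
Proof.
move=> a0 b0 c0 d0 h.
rewrite -(ger0_norm c0) -(ger0_norm d0) -!sqrtr_sqr -!sqrtrM ?sqr_ge0 //.
by rewrite ler_sqrt // mulr_ge0 ?sqr_ge0.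
Qed.



Lemma AV0 (R : realType) (m k : nat) (AB : 'M[R]_m) (AN : 'M[R]_(m, k)) :
  AB \in unitmx -> row_mx AB AN *m Vmat AB AN = 0.
Proof. by move=> U; rewrite /Vmat mul_row_col mulKVmx // mulmxN mulmx1 subrr. Qed.

Lemma PTu (R : realType) (m k : nat) (AB : 'M[R]_m) (AN : 'M[R]_(m, k)) (Q : 'M[R]_(m + k))
  (u1 : 'cV[R]_k) (u2 : 'cV[R]_m) : Q^T = Q ->
  (block_mx (Vmat AB AN)^T 0 0 (row_mx AB AN) *m block_mx 1%:M (- Q) 0 1%:M)^T *m col_mx u1 u2
  = col_mx (Vmat AB AN *m u1) (-(Q *m (Vmat AB AN *m u1)) + (row_mx AB AN)^T *m u2).
Proof.
move=> tQ.
rewrite trmx_mul !tr_block_mx !trmxK !trmx0 trmx1 -mulmxA mul_block_col.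
rewrite !mul0mx addr0 add0r mul_block_col mul1mx mul0mx addr0 mul1mx.
by rewrite linearN /= tQ mulNmx.
Qed.

Lemma Mu (R : realType) (m k : nat) (AB : 'M[R]_m) (AN : 'M[R]_(m, k)) (Q : 'M[R]_(m + k))
  (x s : 'cV[R]_(m + k)) (u1 : 'cV[R]_k) (u2 : 'cV[R]_m) :
  row_mx (diagv s *m Vmat AB AN + diagv x *m Q *m Vmat AB AN) (- (diagv x *m (row_mx AB AN)^T))
    *m col_mx u1 u2
  = diagv s *m (Vmat AB AN *m u1) - diagv x *m (-(Q *m (Vmat AB AN *m u1)) + (row_mx AB AN)^T *m u2).
Proof.
rewrite mul_row_col mulmxDl !mulmxA mulmxDr mulmxN !mulmxA opprD opprK mulNmx.
by rewrite addrA.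
Qed.

Lemma dot_nonpos (R : realType) (m k : nat) (AB : 'M[R]_m) (AN : 'M[R]_(m, k)) (Q : 'M[R]_(m + k))
  (u1 : 'cV[R]_k) (u2 : 'cV[R]_m) :
  AB \in unitmx -> (forall v : 'cV[R]_(m + k), 0 <= (v^T *m Q *m v) 0 0) ->
  dot (Vmat AB AN *m u1) (-(Q *m (Vmat AB AN *m u1)) + (row_mx AB AN)^T *m u2) <= 0.
Proof.
move=> U psd.
rewrite -dotE mulmxDr mulmxN !mulmxA -trmx_mul mulmxA AV0 // mul0mx trmx0 mul0mx addr0 mxE oppr_le0.
by rewrite -mulmxA; apply: psd.
Qed.



Lemma final_arith (R : realType) (mu om q a b c d : R) :
  0 < mu -> 0 < om -> 0 <= q -> 0 <= c -> 0 < d -> 0 <= a -> a <= 2 * om * c ->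
  (2 / 3 * mu / om) * d <= b ->
  a / b <= 3 * ((om ^+ 2 + mu * q) / mu) * (c / d).
Proof.
move=> mu0 om0 q0 c0 d0 a0 ha hb.
have hb0 : 0 < b by apply: lt_le_trans hb; rewrite !mulr_gt0 ?invr_gt0 ?ltr0n.
rewrite ler_pdivrMr //.
apply: (le_trans ha).
have X0 : 0 <= 3 * ((om ^+ 2 + mu * q) / mu) * (c / d).
  have p1 : 0 <= om ^+ 2 + mu * q by apply: addr_ge0; [exact: sqr_ge0| apply: mulr_ge0 => //; exact: ltW].
  apply: mulr_ge0; first apply: mulr_ge0 => //; apply: divr_ge0 => //; exact: ltW.
apply: (le_trans _ (ler_wpM2l X0 hb)).
have -> : 3 * ((om ^+ 2 + mu * q) / mu) * (c / d) * (2 / 3 * mu / om * d)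
   = 2 * (om ^+ 2 + mu * q) * c / om.
  by field; rewrite ?gt_eqF ?ltr0n //; apply/and3P; split; rewrite gt_eqF.
rewrite ler_pdivlMr //.
have : 0 <= 2 * c * (mu * q) by rewrite !mulr_ge0 // ltW.
have -> : 2 * (om ^+ 2 + mu * q) * c = 2 * om * c * om + 2 * c * (mu * q) by ring.
by rewrite lerDl.
Qed.



Theorem lemma3 (R : realType) :
  exists C : R, 0 < C /\
  forall (m k : nat) (AB : 'M[R]_m) (AN : 'M[R]_(m, k))
    (b : 'cV[R]_m) (c : 'cV[R]_(m + k)) (Q : 'M[R]_(m + k))
    (theta : R) (x : 'cV[R]_(m + k)) (y : 'cV[R]_m) (s : 'cV[R]_(m + k)),
  let A : 'M[R]_(m, m + k) := row_mx AB AN in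
  let n := (m + k)%N in
  let V := Vmat AB AN in
  AB \in unitmx ->
  \rank A = m ->
  Q^T = Q ->
  (forall v : 'cV[R]_(m + k), 0 <= (v^T *m Q *m v) 0 0) ->
  0 < theta ->
  theta < Num.min (1 / (3 * Num.sqrt n%:R)) (1 / (4 * frob (Q *m V *m V^T) + 1)) ->
  in_N A b c Q theta x y s ->
  let mu := mu_of x s in
  let omega := omega_of x s in
  let M : 'M[R]_(m + k, k + m) :=
    row_mx (diagv s *m V + diagv x *m Q *m V) (- (diagv x *m A^T)) in
  let VAQ : 'M[R]_(k + m, (m + k) + (m + k)) :=
    block_mx V^T 0 0 A *m block_mx 1%:M (- Q) 0 1%:M in
  cond M <= C * ((omega ^+ 2 + mu * sigma_max Q) / mu) * cond VAQ.
Proof.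
exists 3; split; first by rewrite ltr0n.
move=> m k AB AN b c Q theta x y s A n V U _ tQ psd th0 thlt [[_ [_ [x0 s0]]] hv].
cbv zeta.
set mu := mu_of x s; set omega := omega_of x s.
set M := row_mx _ _.
set VAQ := block_mx _ _ _ _ *m _.
have th1 : theta < 1 / (3 * Num.sqrt n%:R) by move: thlt; rewrite lt_min => /andP[].
have n0 : (0 < m + k)%N.
  rewrite lt0n; apply/negP => /eqP e.
  have : (n%:R : R) = 0 by rewrite /n e.
  by move=> h; move: th1; rewrite h sqrtr0 mulr0 invr0 mulr0 => /(lt_trans th0); rewrite ltxx.
have th3 : theta < 1 / 3.
  have sq1 : 1 <= Num.sqrt (n%:R : R) by rewrite -{1}sqrtr1 ler_sqrt ?ler0n // ler1n.
  move: th1; rewrite ltr_pdivlMr ?mulr_gt0 ?ltr0n // ?(lt_le_trans ltr01) // => h.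
  rewrite ltr_pdivlMr ?ltr0n //; nra.
pose i0 : 'I_(m + k) := Ordinal n0.
have mu0 : 0 < mu.
  rewrite /mu /mu_of dotE divr_gt0 ?ltr0n //.
  rewrite /dot (bigD1 i0) //=; apply: (lt_le_trans (mulr_gt0 (x0 i0) (s0 i0))).
  rewrite lerDl; apply: sumr_ge0 => i _; exact: ltW (mulr_gt0 (x0 i) (s0 i)).
have xo : forall i, x i 0 <= omega.
  move=> i; apply: le_trans (le_bigmax _ (fun i => Num.max (x i 0) (s i 0)) i).
  by rewrite le_max lexx.
have so : forall i, s i 0 <= omega.
  move=> i; apply: le_trans (le_bigmax _ (fun i => Num.max (x i 0) (s i 0)) i).
  by rewrite le_max lexx orbT.
have om0 : 0 < omega by apply: lt_le_trans (x0 i0) (xo i0).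
set mp := 2 / 3 * mu.
have mp0 : 0 < mp by rewrite mulr_gt0 // divr_gt0.
have xs : forall i, mp <= x i 0 * s i 0.
  move=> i.
  set e := diagv x *m diagv s *m const_mx 1 - mu_of x s *: const_mx 1 in hv.
  have ei : e i 0 = x i 0 * s i 0 - mu.
    by rewrite /e -mulmxA /diagv !mul_diag_mx !mxE !mulr1.
  have h1 : e i 0 ^+ 2 <= nsq e.
    by rewrite /nsq (bigD1 i) //= lerDl; apply: sumr_ge0 => j _; exact: sqr_ge0.
  rewrite -vnorm_sq in h1.
  have h2 := vnorm_ge0 e.
  rewrite ei in h1.
  have h3 : 0 <= theta * mu by rewrite mulr_ge0 // ltW.
  rewrite -/mu in hv.
  have h4 : (x i 0 * s i 0 - mu) ^+ 2 <= (theta * mu) ^+ 2.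
    apply: le_trans h1 _; rewrite lerXn2r ?nnegrE //.
  have h5 : `|x i 0 * s i 0 - mu| <= theta * mu.
    by rewrite -sqrtr_sqr -(ger0_norm h3) -sqrtr_sqr ler_sqrt ?sqr_ge0.
  move: h5; rewrite ler_norml => /andP[h5 _].
  have h6 : theta * mu <= 1 / 3 * mu by rewrite ler_pM2r // ltW.
  rewrite /mp; lra.
have core : forall u : 'cV[R]_(k + m),
  (vnorm (M *m u) <= 2 * omega * vnorm (VAQ^T *m u)) /\ (mp * vnorm (VAQ^T *m u) <= omega * vnorm (M *m u)).
  move=> u; rewrite -(vsubmxK u).
  rewrite /M /VAQ /V /A PTu // Mu.
  set z1 := Vmat AB AN *m _; set z2 := - (Q *m z1) + _.
  have dn : dot z1 z2 <= 0 by apply: dot_nonpos.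
  have kl := key_lo x0 s0 xo so xs mp0 dn.
  have kh := key_hi z1 z2 x0 s0 xo so.
  rewrite !vnormE nsq_col; split.
    rewrite -[Num.sqrt (nsq _)]mul1r; apply: sqrt_le; rewrite ?nsq_ge0 ?addr_ge0 ?nsq_ge0 //.
      by rewrite mulr_ge0 // ltW.
    rewrite expr1n mul1r; apply: (le_trans kh); apply: ler_wpM2r; first by rewrite addr_ge0 ?nsq_ge0.
    have : 0 <= omega ^+ 2 by rewrite sqr_ge0.
    rewrite exprMn; nra.
  by apply: sqrt_le; rewrite ?nsq_ge0 ?addr_ge0 ?nsq_ge0 // ltW.
have km0 : (0 < k + m)%N by rewrite addnC.
pose j0 : 'I_(k + m) := Ordinal km0.
set SPT := uset (VAQ^T).
have smM : sigma_min M = inf (uset M) by rewrite /sigma_min ifT //; lia.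
have smP : sigma_min VAQ = inf SPT.
  rewrite /sigma_min ifF //; apply/negbTE; rewrite -ltnNge; lia.
have neM : (uset M !=set0)%classic by exists (vnorm (M *m delta_mx j0 0)), (delta_mx j0 0); rewrite vnorm_delta.
have neP : (SPT !=set0)%classic by exists (vnorm (VAQ^T *m delta_mx j0 0)), (delta_mx j0 0); rewrite vnorm_delta.
have lbM : has_lbound (uset M) by exists 0 => r [v [_ ->]]; exact: vnorm_ge0.
have lbP : has_lbound SPT by exists 0 => r [v [_ ->]]; exact: vnorm_ge0.
have hA : sigma_max M <= 2 * omega * sigma_max VAQ.
  rewrite sigma_maxE; apply: ge_sup => // r [u [u1 ->]].
  have [h _] := core u; apply: (le_trans h).
  have := le_sigma_max_tr VAQ u; rewrite u1 mulr1 => h2.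
  by rewrite ler_wpM2l // mulr_ge0 // ltW.
have hB : mp / omega * sigma_min VAQ <= sigma_min M.
  rewrite smM; apply: lb_le_inf => // r [u [u1 ->]].
  have [_ h] := core u.
  have h2 : sigma_min VAQ <= vnorm (VAQ^T *m u) by rewrite smP; apply: ge_inf => //; exists u.
  rewrite mulrAC ler_pdivrMr // [vnorm _ * _]mulrC.
  apply: (le_trans _ h); exact (ler_wpM2l (ltW mp0) h2).
have hC : sigma_min M / (2 * omega) <= sigma_min VAQ.
  rewrite smP; apply: lb_le_inf => // r [u [u1 ->]].
  have [h _] := core u.
  have h2 : sigma_min M <= vnorm (M *m u) by rewrite smM; apply: ge_inf => //; exists u.
  rewrite ler_pdivrMr ?mulr_gt0 // mulrC; exact: le_trans h2 h.
have hD : 0 <= sigma_min M by rewrite smM; apply: lb_le_inf => // r [v [_ ->]]; exact: vnorm_ge0.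
have hE : 0 <= sigma_min VAQ by rewrite smP; apply: lb_le_inf => // r [v [_ ->]]; exact: vnorm_ge0.
have [P0|Pn0] := eqVneq (sigma_min VAQ) 0.
  have M0 : sigma_min M = 0.
    apply/eqP; rewrite eq_le hD andbT; move: hC; rewrite P0 ler_pdivrMr ?mulr_gt0 // mul0r //.
  by rewrite /cond M0 P0 !invr0 !mulr0.
have Pp : 0 < sigma_min VAQ by rewrite lt_def Pn0 hE.
rewrite /cond; apply: final_arith => //.
- exact: sigma_max_ge0.
- exact: sigma_max_ge0.
- exact: sigma_max_ge0.
Qed.
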